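(* Let $L, e_i, e_j, e_h, e_w, e_{v_i}, e_{v_j}$ be mutually independent random variables, where $L, e_i, e_j, e_h, e_w$ are mean-zero Gaussian. For constants $a_i, a_j, a_h, a_w$ define $X_m = a_m L + e_m$ for $m \in \{i,j,h,w\}$. Let $f, g$ be measurable functions such that $V_i = f(X_i, e_{v_i})$ and $V_j = g(X_j, e_{v_j})$ have finite second moments. Then the tetrad constraint for the partition that does not pair $V_i$ with $V_j$ holds: $$\mathrm{Cov}(V_i,X_w)\,\mathrm{Cov}(V_j,X_h) = \mathrm{Cov}(V_i,X_h)\,\mathrm{Cov}(V_j,X_w).$$
   Context: This describes a pure 1-factor measurement model with a single latent common cause $L$ of linear Gaussian indicators, in which two of the indicators $X_i, X_j$ are replaced by variables $V_i, V_j$ that are functions of them and of independent noise terms. *)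

(* Defs.v *)
From HB Require Import structures.
From mathcomp Require Import all_boot all_order all_algebra.
From mathcomp Require Import all_classical all_reals all_analysis.
Set Implicit Arguments. Unset Strict Implicit. Unset Printing Implicit Defensive.
Import Order.TTheory GRing.Theory Num.Theory.
Local Open Scope classical_set_scope.
Local Open Scope ring_scope.

Definition mutually_independent {d} {T : measurableType d} {R : realType}
    (P : probability T R) (I : finType) (X : I -> T -> R) : Prop :=
  forall (J : {set I}) (B : I -> set R),
    (forall i, measurable (B i)) ->
    P (\bigcap_(i in [set i | i \in J]) (X i @^-1` B i)) =
    (\prod_(i in J) P (X i @^-1` B i))%E.

Definition centered_gaussian {d} {T : measurableType d} {R : realType}
    (P : probability T R) (X : T -> R) : Prop :=
  exists s : R, s != 0 /\
    forall A : set R, measurable A -> P (X @^-1` A) = normal_prob 0 s A.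

(* Main.v *)
Require Import Defs.
From HB Require Import structures.
From mathcomp Require Import all_boot all_order all_algebra.
From mathcomp Require Import all_classical all_reals all_analysis.
From mathcomp Require Import measurable_realfun ring lra.
Import Order.TTheory GRing.Theory Num.Theory.
Local Open Scope classical_set_scope.
Local Open Scope ring_scope.
Section gauss.
Context (R : realType).

Lemma sq_normal_bound (s x : R) (s0 : s != 0) :
  x ^+ 2 * normal_pdf 0 s x <=
  (normal_peak s * (s ^+ 2 *+ 4) / normal_peak (s * Num.sqrt 2)) *
    normal_pdf 0 (s * Num.sqrt 2) x.
Proof.
have s20 : Num.sqrt (2 : R) != 0 by rewrite gt_eqF // sqrtr_gt0.
have t0 : s * Num.sqrt 2 != 0 by rewrite mulf_neq0.
rewrite !normal_pdfE //= /normal_fun.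
have key : forall u : R, 0 <= u -> u * expR (- u) <= 1.
  move=> u u0; rewrite expRN ler_pdivrMr ?expR_gt0 // mul1r.
  by apply: le_trans (expR_ge1Dx u); rewrite lerDr.
have sn : s ^+ 2 != 0 by rewrite expf_neq0.
set u := x ^+ 2 / (s ^+ 2 *+ 4).
have u0 : 0 <= u by rewrite divr_ge0 ?sqr_ge0 // mulrn_wge0 // sqr_ge0.
have e1 : - (x - 0) ^+ 2 / (s ^+ 2 *+ 2) = - u + - u.
  by rewrite /u subr0; field.
have e2 : - (x - 0) ^+ 2 / ((s * Num.sqrt 2) ^+ 2 *+ 2) = - u.
  by rewrite exprMn sqr_sqrtr // /u subr0; field.
have e3 : x ^+ 2 = s ^+ 2 *+ 4 * u.
  by rewrite /u; field.
rewrite e1 e2 expRD e3.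
have pt0 : normal_peak (s * Num.sqrt 2) != 0 by rewrite gt_eqF // normal_peak_gt0.
set A := normal_peak s * (s ^+ 2 *+ 4) * expR (- u).
have A0 : 0 <= A.
  by rewrite mulr_ge0 ?expR_ge0 // mulr_ge0 ?normal_peak_ge0 // mulrn_wge0 // sqr_ge0.
have -> : s ^+ 2 *+ 4 * u * (normal_peak s * (expR (- u) * expR (- u))) =
  A * (u * expR (- u)) by rewrite /A; ring.
have -> : normal_peak s * (s ^+ 2 *+ 4) / normal_peak (s * Num.sqrt 2) *
   (normal_peak (s * Num.sqrt 2) * expR (- u)) = A.
  by rewrite /A; field.
by rewrite ler_piMr // key.
Qed.
End gauss.

Section core.
Context d (T : measurableType d) (R : realType) (P : probability T R).
Local Open Scope ereal_scope.

Lemma indep_sigma (G : set (set T)) (Gm : G `<=` measurable)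
  (setIG : setI_closed G) (GT : G setT) (Z : T -> R)
  (mZ : measurable_fun setT Z)
  (H : forall A C, G A -> measurable C ->
     P (A `&` Z @^-1` C) = P A * P (Z @^-1` C)) :
  forall A C, <<s G >> A -> measurable C ->
     P (A `&` Z @^-1` C) = P A * P (Z @^-1` C).
Proof.
move=> A C GA mC.
have mZC : measurable (Z @^-1` C) by rewrite -[_ @^-1` _]setTI; exact: mZ.
have r0 : (0 <= fine (P (Z @^-1` C)))%R by apply: fine_ge0.
have PZC : P (Z @^-1` C) = (fine (P (Z @^-1` C)))%:E.
  by rewrite fineK// fin_num_measure.
pose m1 := mrestr P mZC.
pose m2 := mscale (NngNum r0) P.
have cov : \bigcup_(k : nat) (setT : set T) = setT.
  by rewrite bigcup_const.
have m12 : forall B, G B -> m1 B = m2 B.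
  by move=> B GB; rewrite /m1 /m2 /mrestr /mscale /= -PZC muleC; exact: H.
have m1oo : forall k : nat, m1 setT < +oo.
  by move=> _; rewrite /m1 /mrestr setTI (le_lt_trans (probability_le1 _ _)) ?ltry.
have := @g_sigma_algebra_measure_unique _ R T G Gm (fun=> setT) (fun=> GT) cov m1 m2 setIG m12 m1oo A GA.
move=> E; transitivity (m1 A) => //; transitivity (m2 A) => //. rewrite /m2 /mscale /= -PZC muleC. done.
Qed.

Definition mkMF {d'} {T' : measurableType d'} {V : T -> T'} (mV : measurable_fun setT V)
  : {mfun T >-> T'} :=
  MeasurableFun.Pack (MeasurableFun.Class (isMeasurableFun.Build _ _ _ _ V mV)).

Lemma integrable_dist {d'} {T' : measurableType d'} (X : {mfun T >-> T'}) (g : T' -> \bar R) :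
  measurable_fun setT g -> P.-integrable setT (g \o X) ->
  (distribution P X).-integrable setT g.
Proof.
move=> mg ig; apply: integrable_pushforward => //.
Qed.

Lemma indep_E (V Z : T -> R) (mV : measurable_fun setT V) (mZ : measurable_fun setT Z)
  (HVZ : forall A C, measurable A -> measurable C ->
    P (V @^-1` A `&` Z @^-1` C) = P (V @^-1` A) * P (Z @^-1` C))
  (V2 : V \in Lfun P 2%:E) (Z2 : Z \in Lfun P 2%:E) :
  'E_P[(V * Z)%R] = 'E_P[V] * 'E_P[Z].
Proof.
have Pfin : P setT \is a fin_num := fin_num_measure P _ measurableT.
have V1 := Lfun_subset12 Pfin V2.
have Z1 := Lfun_subset12 Pfin Z2.
have VZ1 := Lfun2_mul_Lfun1 V2 Z2.
pose VM := mkMF mV. pose ZM := mkMF mZ.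
pose PhiM := mkMF (measurable_fun_pair mV mZ).
pose muV := distribution P VM. pose muZ := distribution P ZM.
pose mu := distribution P PhiM.
pose f : R * R -> \bar R := fun z => (z.1 * z.2)%:E.
have mf : measurable_fun setT f.
  apply/measurable_EFinP; apply: measurable_funM => //.
have eqm : forall X, measurable X -> (muV \x muZ) X = mu X.
  apply: product_measure_unique => A B mA mB.
  rewrite /mu /muV /muZ /distribution /pushforward /= -HVZ//.
have imu : mu.-integrable setT f.
  apply: integrable_dist => //.
  by move/Lfun1_integrable : VZ1.
have iprod : (muV \x muZ).-integrable setT f.
  apply/integrableP; split => //.
  rewrite (eq_measure_integral mu); last by move=> A mA _; exact: eqm.
  by move/integrableP : imu => [].
have iV : muV.-integrable setT EFin.
  apply: (@integrable_dist _ _ VM EFin (@EFin_measurable R setT)).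
  by move/Lfun1_integrable : V1.
have iZ : muZ.-integrable setT EFin.
  apply: (@integrable_dist _ _ ZM EFin (@EFin_measurable R setT)).
  by move/Lfun1_integrable : Z1.
have EZ : \int[muZ]_y (y%:E) = 'E_P[Z].
  rewrite unlock; rewrite (@integral_distribution _ _ _ _ _ P ZM EFin (@EFin_measurable R setT)) //.
  by move/Lfun1_integrable : Z1.
have EV : \int[muV]_y (y%:E) = 'E_P[V].
  rewrite unlock; rewrite (@integral_distribution _ _ _ _ _ P VM EFin (@EFin_measurable R setT)) //.
  by move/Lfun1_integrable : V1.
have EVZ : 'E_P[(V * Z)%R] = \int[mu]_z f z.
  rewrite unlock /mu integral_distribution //.
  by move/Lfun1_integrable : VZ1.
have Zfin : 'E_P[Z] \is a fin_num by exact: expectation_fin_num.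
rewrite EVZ (eq_measure_integral (muV \x muZ)); last first.
  by move=> A mA _; rewrite -[LHS]/(mu A) -eqm.
rewrite -(integral12_prod_meas1 iprod).
rewrite /fubini_F.
under eq_integral => x _.
  rewrite /f /=.
  under eq_integral => y _ do rewrite EFinM.
  rewrite integralZl // EZ -(fineK Zfin).
  over.
by rewrite /= integralZr // EV fineK.
Qed.


Lemma cov_indep0 (U1 U2 U3 Z : T -> R)
  (mU1 : measurable_fun setT U1) (mU2 : measurable_fun setT U2)
  (mU3 : measurable_fun setT U3) (mZ : measurable_fun setT Z)
  (a : R) (h : (R * R)%type -> R) (mh : measurable_fun setT h)
  (H : forall B1 B2 B3 C, measurable B1 -> measurable B2 -> measurable B3 ->
     measurable C ->
     P (U1 @^-1` B1 `&` U2 @^-1` B2 `&` U3 @^-1` B3 `&` Z @^-1` C) =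
     P (U1 @^-1` B1 `&` U2 @^-1` B2 `&` U3 @^-1` B3) * P (Z @^-1` C)) :
  (fun w => h (a * U1 w + U2 w, U3 w))%R \in Lfun P 2%:E ->
  Z \in Lfun P 2%:E ->
  covariance P (fun w => h (a * U1 w + U2 w, U3 w))%R Z = 0.
Proof.
set V := (fun w => _).
move=> V2 Z2.
pose G := [set A | exists B1 B2 B3, [/\ measurable B1, measurable B2,
  measurable B3 & A = U1 @^-1` B1 `&` U2 @^-1` B2 `&` U3 @^-1` B3]].
have Gm : G `<=` measurable.
  move=> A [B1 [B2 [B3 [m1 m2 m3 ->]]]].
  apply: measurableI; [apply: measurableI|]; rewrite -[_ @^-1` _]setTI;
    [exact: mU1|exact: mU2|exact: mU3].
have setIG : setI_closed G.
  move=> A B [B1 [B2 [B3 [m1 m2 m3 ->]]]] [C1 [C2 [C3 [n1 n2 n3 ->]]]].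
  exists (B1 `&` C1), (B2 `&` C2), (B3 `&` C3); split; try exact: measurableI.
  by apply/seteqP; split => x /=; tauto.
have GT : G setT.
  exists setT, setT, setT; split => //.
  by rewrite !preimage_setT !setIT.
have HG : forall A C, G A -> measurable C ->
    P (A `&` Z @^-1` C) = P A * P (Z @^-1` C).
  by move=> A C [B1 [B2 [B3 [m1 m2 m3 ->]]]] mC; exact: H.
have HS := @indep_sigma G Gm setIG GT Z mZ HG.
pose T' := g_sigma_algebraType G.
have mU1' : measurable_fun (setT : set T') U1.
  move=> _ B mB; apply: sub_sigma_algebra; exists B, setT, setT; split => //.
  by rewrite !preimage_setT !setIT setTI.
have mU2' : measurable_fun (setT : set T') U2.
  move=> _ B mB; apply: sub_sigma_algebra; exists setT, B, setT; split => //.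
  by rewrite !preimage_setT !setIT setTI.
have mU3' : measurable_fun (setT : set T') U3.
  move=> _ B mB; apply: sub_sigma_algebra; exists setT, setT, B; split => //.
  by rewrite !preimage_setT !setTI.
have mV' : measurable_fun (setT : set T') V.
  apply: measurableT_comp => //; apply: measurable_fun_pair => //.
  by apply: measurable_funD => //; apply: measurable_funM.
have mV : measurable_fun setT V.
  apply: measurableT_comp => //; apply: measurable_fun_pair => //.
  by apply: measurable_funD => //; apply: measurable_funM.
have HVZ : forall A C, measurable A -> measurable C ->
    P (V @^-1` A `&` Z @^-1` C) = P (V @^-1` A) * P (Z @^-1` C).
  move=> A C mA mC; apply: HS => //.
  by have := mV' (@measurableT _ T') A mA; rewrite setTI.
have Pfin : P setT \is a fin_num := fin_num_measure P _ measurableT.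
have V1 := Lfun_subset12 Pfin V2.
have Z1 := Lfun_subset12 Pfin Z2.
have VZ1 := Lfun2_mul_Lfun1 V2 Z2.
rewrite covarianceE // indep_E // subee // fin_numM // expectation_fin_num //.
Qed.


Lemma gauss_L2 (X : T -> R) (mX : measurable_fun setT X) (s : R) (s0 : (s != 0)%R)
  (hX : forall A, measurable A -> P (X @^-1` A) = normal_prob 0%R s A) :
  X \in Lfun P 2%:E.
Proof.
have mf2 : measurable_fun setT (fun x : R => (x ^+ 2)%:E).
  by apply/measurable_EFinP; exact: measurable_funX.
have key : \int[P]_x ((X x) ^+ 2)%:E < +oo.
  have mX' : measurable_fun setT (X : T -> measurableTypeR R) by exact: mX.
  pose XM := @mkMF _ (measurableTypeR R) X mX'.
  have mf2' : measurable_fun setT (fun x : measurableTypeR R => ((x : R) ^+ 2)%:E).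
    exact: mf2.
  rewrite (_ : \int[P]_x ((X x) ^+ 2)%:E =
     \int[distribution P XM]_y (((y : R) ^+ 2)%:E)); last first.
    rewrite (@ge0_integral_distribution _ _ _ _ _ P XM _ mf2') //.
    by move=> y; rewrite lee_fin sqr_ge0.
  rewrite (eq_measure_integral (normal_prob 0%R s)); last first.
    by move=> A mA _; exact: hX.
  have nuD := normal_prob_dominates 0%R s.
  rewrite -(Radon_Nikodym_SigmaFinite.change_of_variables nuD) //; last first.
    by move=> x; rewrite lee_fin sqr_ge0.
  have iRN := Radon_Nikodym_SigmaFinite.f_integrable nuD.
  have mRN := measurable_int _ iRN.
  have mpdf : measurable_fun setT (fun x : measurableTypeR R => (normal_pdf 0%R s x)%:E).
    by apply/measurable_EFinP; exact: measurable_normal_pdf.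
  rewrite (ae_eq_integral (fun x : measurableTypeR R => ((x : R) ^+ 2)%:E * (normal_pdf 0%R s x)%:E)) //; last 3 first.
  - by apply: emeasurable_funM.
  - by apply: emeasurable_funM.
  - apply: ae_eqe_mul2l; apply: integral_ae_eq => //.
    move=> E _ mE; rewrite -Radon_Nikodym_SigmaFinite.f_integral //.
  pose t := (s * Num.sqrt 2)%R.
  pose K := (normal_peak s * (s ^+ 2 *+ 4) / normal_peak t)%R.
  have K0 : (0 <= K)%R.
    by rewrite /K mulr_ge0 ?invr_ge0 ?normal_peak_ge0 // mulr_ge0 ?normal_peak_ge0 // mulrn_wge0 // sqr_ge0.
  apply: (@le_lt_trans _ _ (\int[lebesgue_measure]_x (K%:E * (normal_pdf 0%R t x)%:E))).
    apply: ge0_le_integral => //.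
    - by move=> x _; rewrite mule_ge0 // lee_fin ?sqr_ge0 ?normal_pdf_ge0.
    - by apply: emeasurable_funM.
    - apply: emeasurable_funM => //.
      by apply/measurable_EFinP; exact: measurable_normal_pdf.
    - by move=> x _; rewrite -!EFinM lee_fin; exact: sq_normal_bound.
  rewrite ge0_integralZl //; last 2 first.
  - by apply/measurable_EFinP; exact: measurable_normal_pdf.
  - by move=> x _; rewrite lee_fin normal_pdf_ge0.
  by rewrite integral_normal_pdf mule1 ltry.
rewrite inE; apply/andP; split; first by rewrite inE.
rewrite inE /= /finite_norm unlock /Lnorm; apply: poweR_lty.
under eq_integral => x _.
  rewrite -[(EFin \o X) x]/((X x)%:E) abse_EFin poweR_EFin powR_mulrn ?normr_ge0 // real_normK ?num_real //.
  over.
exact: key.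
Qed.

End core.

Section ind.
Context d (T : measurableType d) (R : realType) (P : probability T R).
Local Open Scope ereal_scope.

Lemma indep4 (I : finType) (X : I -> T -> R) (hX : mutually_independent P X)
  (p q r s : I) (qp : q != p) (rp : r != p) (rq : r != q)
  (sp : s != p) (sq : s != q) (sr : s != r)
  (B1 B2 B3 C : set R) : measurable B1 -> measurable B2 -> measurable B3 ->
  measurable C ->
  P (X p @^-1` B1 `&` X q @^-1` B2 `&` X r @^-1` B3 `&` X s @^-1` C) =
  P (X p @^-1` B1 `&` X q @^-1` B2 `&` X r @^-1` B3) * P (X s @^-1` C).
Proof.
move=> m1 m2 m3 mC.
pose B i := if i == p then B1 else if i == q then B2 else if i == r then B3 else C.
have mB : forall i, measurable (B i).
  by move=> i; rewrite /B; case: ifP => // _; case: ifP => // _; case: ifP.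
have Bp : B p = B1 by rewrite /B eqxx.
have Bq : B q = B2 by rewrite /B (negbTE qp) eqxx.
have Br : B r = B3 by rewrite /B (negbTE rp) (negbTE rq) eqxx.
have Bs : B s = C by rewrite /B (negbTE sp) (negbTE sq) (negbTE sr).
have E4 := hX [set p; q; r; s]%SET B mB.
have E3 := hX [set p; q; r]%SET B mB.
have S4 : \bigcap_(i in [set i | i \in [set p; q; r; s]%SET]) (X i @^-1` B i) =
    X p @^-1` B1 `&` X q @^-1` B2 `&` X r @^-1` B3 `&` X s @^-1` C.
  apply/seteqP; split => x /=.
    move=> hx.
    have h1 := hx p; have h2 := hx q; have h3 := hx r; have h4 := hx s.
    rewrite /= !inE !eqxx ?orbT in h1 h2 h3 h4.
    rewrite /preimage /= -Bp -Bq -Br -Bs.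
    by split; [split; [split|]|]; [apply: h1|apply: h2|apply: h3|apply: h4].
  move=> [[[h1 h2] h3] h4] i /=; rewrite !inE => /orP[/orP[/orP[]|]|] /eqP ->;
    by rewrite /preimage /= ?Bp ?Bq ?Br ?Bs.
have S3 : \bigcap_(i in [set i | i \in [set p; q; r]%SET]) (X i @^-1` B i) =
    X p @^-1` B1 `&` X q @^-1` B2 `&` X r @^-1` B3.
  apply/seteqP; split => x /=.
    move=> hx.
    have h1 := hx p; have h2 := hx q; have h3 := hx r.
    rewrite /= !inE !eqxx ?orbT in h1 h2 h3.
    rewrite /preimage /= -Bp -Bq -Br.
    by split; [split|]; [apply: h1|apply: h2|apply: h3].
  move=> [[h1 h2] h3] i /=; rewrite !inE => /orP[/orP[]|] /eqP ->;
    by rewrite /preimage /= ?Bp ?Bq ?Br.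
rewrite -S4 -S3 E4 E3 (bigD1 s) /=; last by rewrite !inE eqxx !orbT.
rewrite muleC Bs; congr (_ * _).
apply: eq_bigl => i; rewrite !inE.
case: (i =P s) => [->|/eqP ns]; first by rewrite orbT andbF (negbTE sp) (negbTE sq) (negbTE sr).
by rewrite orbF andbT.
Qed.
End ind.



Section final.
Local Open Scope ereal_scope.
Lemma cov_lin d (T : measurableType d) (R : realType) (P : probability T R)
  (V U E : T -> R) (a : R) :
  V \in Lfun P 2%:E -> U \in Lfun P 2%:E -> E \in Lfun P 2%:E ->
  covariance P V E = 0 ->
  covariance P V (fun w => a * U w + E w)%R = a%:E * covariance P V U.
Proof.
move=> V2 U2 E2 c0.
have Pfin : P setT \is a fin_num := fin_num_measure P _ measurableT.
have -> : (fun w => a * U w + E w)%R = ((a \o* U) \+ E)%R.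
  by apply: funext => w /=; rewrite mulrC.
rewrite covarianceDr //; last by apply: Lfun_scale => //; rewrite ler1n.
have V1 := Lfun_subset12 Pfin V2.
have U1 := Lfun_subset12 Pfin U2.
have VU1 := Lfun2_mul_Lfun1 V2 U2.
by rewrite c0 adde0 covarianceZr.
Qed.
End final.

Theorem mainTheorem2 (d : measure_display) (T : measurableType d) (R : realType)
  (P : probability T R)
  (L e_i e_j e_h e_w e_vi e_vj : {RV P >-> R})
  (a_i a_j a_h a_w : R) (f g : (R * R)%type -> R) :
  mutually_independent P
    (fun k : 'I_7 => nth (L : T -> R)
       [:: (L : T -> R); (e_i : T -> R); (e_j : T -> R); (e_h : T -> R);
           (e_w : T -> R); (e_vi : T -> R); (e_vj : T -> R)] k) ->
  centered_gaussian P L ->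
  centered_gaussian P e_i -> centered_gaussian P e_j ->
  centered_gaussian P e_h -> centered_gaussian P e_w ->
  measurable_fun setT f -> measurable_fun setT g ->
  let X_i := fun w => a_i * L w + e_i w in
  let X_j := fun w => a_j * L w + e_j w in
  let X_h := fun w => a_h * L w + e_h w in
  let X_w := fun w => a_w * L w + e_w w in
  let V_i := fun w => f (X_i w, e_vi w) in
  let V_j := fun w => g (X_j w, e_vj w) in
  V_i \in Lfun P 2%:E -> V_j \in Lfun P 2%:E ->
  (covariance P V_i X_w * covariance P V_j X_h
   = covariance P V_i X_h * covariance P V_j X_w)%E.
Proof.
move=> hind gL gi gj gh gw mf mg X_i X_j X_h X_w V_i V_j Vi2 Vj2.
pose Xs := (fun k : 'I_7 => nth (L : T -> R)
       [:: (L : T -> R); (e_i : T -> R); (e_j : T -> R); (e_h : T -> R);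
           (e_w : T -> R); (e_vi : T -> R); (e_vj : T -> R)] k).
pose o0 := @Ordinal 7 0 erefl. pose o1 := @Ordinal 7 1 erefl.
pose o2 := @Ordinal 7 2 erefl. pose o3 := @Ordinal 7 3 erefl.
pose o4 := @Ordinal 7 4 erefl. pose o5 := @Ordinal 7 5 erefl.
pose o6 := @Ordinal 7 6 erefl.
have L2 : (L : T -> R) \in Lfun P 2%:E.
  by case: gL => s [s0 hs]; exact: (@gauss_L2 _ _ _ P _ (measurable_funPT L) s s0 hs).
have h2 : (e_h : T -> R) \in Lfun P 2%:E.
  by case: gh => s [s0 hs]; exact: (@gauss_L2 _ _ _ P _ (measurable_funPT e_h) s s0 hs).
have w2 : (e_w : T -> R) \in Lfun P 2%:E.
  by case: gw => s [s0 hs]; exact: (@gauss_L2 _ _ _ P _ (measurable_funPT e_w) s s0 hs).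
have Hiw := @indep4 _ _ _ P _ Xs hind o0 o1 o5 o4 erefl erefl erefl erefl erefl erefl.
have Hih := @indep4 _ _ _ P _ Xs hind o0 o1 o5 o3 erefl erefl erefl erefl erefl erefl.
have Hjw := @indep4 _ _ _ P _ Xs hind o0 o2 o6 o4 erefl erefl erefl erefl erefl erefl.
have Hjh := @indep4 _ _ _ P _ Xs hind o0 o2 o6 o3 erefl erefl erefl erefl erefl erefl.
have ciw : covariance P V_i e_w = 0.
  exact: (@cov_indep0 _ _ _ P _ _ _ _ (measurable_funPT L) (measurable_funPT e_i)
    (measurable_funPT e_vi) (measurable_funPT e_w) a_i _ mf Hiw Vi2 w2).
have cih : covariance P V_i e_h = 0.
  exact: (@cov_indep0 _ _ _ P _ _ _ _ (measurable_funPT L) (measurable_funPT e_i)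
    (measurable_funPT e_vi) (measurable_funPT e_h) a_i _ mf Hih Vi2 h2).
have cjw : covariance P V_j e_w = 0.
  exact: (@cov_indep0 _ _ _ P _ _ _ _ (measurable_funPT L) (measurable_funPT e_j)
    (measurable_funPT e_vj) (measurable_funPT e_w) a_j _ mg Hjw Vj2 w2).
have cjh : covariance P V_j e_h = 0.
  exact: (@cov_indep0 _ _ _ P _ _ _ _ (measurable_funPT L) (measurable_funPT e_j)
    (measurable_funPT e_vj) (measurable_funPT e_h) a_j _ mg Hjh Vj2 h2).
rewrite /X_w /X_h !cov_lin //.
by rewrite muleACA [RHS]muleACA [(a_h%:E * a_w%:E)%E]muleC.
Qed.
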